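(* There is an infinite family of directed graphs (with unit arc lengths) such that, with $n$ the number of vertices, the distance greedy algorithm d-HHL finds a hierarchical hub labeling of size $\Omega(n^{3/2})$ while the optimal hierarchical hub labeling has size $O(n)$.
   Context: For a directed graph $G=(V,E)$, $n=|V|$, a hub labeling assigns forward and backward labels $L_f(v),L_b(v)\subseteq V$ such that for every ordered pair $(u,w)$ with $w$ reachable from $u$, $L_f(u)\cap L_b(w)$ contains a vertex on a shortest $u$–$w$ path; its size is $\sum_v(|L_f(v)|+|L_b(v)|)$. It is hierarchical (HHL) if there is a bijection $\pi:V\to\{1,\dots,n\}$ with $u\in L_f(v)\cup L_b(v)\Rightarrow\pi(u)\le\pi(v)$. d-HHL: start with empty labels; $U$ is the set of uncovered pairs. Each pair gets weight $W(u,w)=0$ if $\mathrm{dist}(u,w)=0$ and $n^{2\lfloor\log_2\mathrm{dist}(u,w)\rfloor}$ otherwise. For each not-yet-selected vertex $v$, the center graph is the bipartite graph with two copies $X,Y$ of $V$ and an arc $(u,w)$ of weight $W(u,w)$ for each $(u,w)\in U$ having a shortest $u$–$w$ path through $v$. Each iteration selects a not-yet-selected $v$ whose center graph has the largest total arc weight and adds $v$ to $L_f(u)$ for all non-isolated $u\in X$ and to $L_b(w)$ for all non-isolated $w\in Y$, until all pairs are covered. *)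

(* Defs.v *)
(* Directed graphs with unit arc lengths: a relation e on a finType V. *)
From mathcomp Require Import all_boot.
Set Implicit Arguments. Unset Strict Implicit. Unset Printing Implicit Defensive.

Section HHL.
Variables (V : finType) (e : rel V).

Definition reachable (u w : V) : bool := connect e u w.

Definition walk_len (k : nat) (u w : V) : bool :=
  [exists p : k.-tuple V, path e u p && (last u p == w)].

(* distance (number of arcs of a shortest path); = #|V| if unreachable *)
Definition dist (u w : V) : nat :=
  find (fun k => walk_len k u w) (iota 0 #|V|).

Definition on_sp (u w x : V) : bool :=
  reachable u w &&
  [exists p : (dist u w).-tuple V,
     [&& path e u p, last u p == w & x \in u :: p]].

Definition labels := V -> {set V}.

Definition covered (Lf Lb : labels) (u w : V) : bool :=
  [exists x, [&& x \in Lf u, x \in Lb w & on_sp u w x]].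

Definition is_hub_labeling (Lf Lb : labels) : Prop :=
  forall u w, reachable u w -> covered Lf Lb u w.

Definition hl_size (Lf Lb : labels) : nat :=
  \sum_(v : V) (#|Lf v| + #|Lb v|).

(* hierarchical: bijection pi : V -> {1..n} (here 'I_n, 0-based) *)
Definition is_hierarchical (Lf Lb : labels) : Prop :=
  exists pi : V -> 'I_#|V|, bijective pi /\
    forall u v, u \in Lf v :|: Lb v -> (pi u <= pi v)%N.

Definition is_HHL (Lf Lb : labels) : Prop :=
  is_hub_labeling Lf Lb /\ is_hierarchical Lf Lb.

Definition uncov (Lf Lb : labels) (u w : V) : bool :=
  reachable u w && ~~ covered Lf Lb u w.

Definition pair_weight (u w : V) : nat :=
  if dist u w == 0 then 0 else #|V| ^ (2 * trunc_log 2 (dist u w)).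

Definition center_arc (Lf Lb : labels) (v u w : V) : bool :=
  uncov Lf Lb u w && on_sp u w v.

Definition center_weight (Lf Lb : labels) (v : V) : nat :=
  \sum_(u : V) \sum_(w : V | center_arc Lf Lb v u w) pair_weight u w.

Definition dhhl_step (S : {set V}) (Lf Lb : labels)
    (S' : {set V}) (Lf' Lb' : labels) : Prop :=
  exists v, [/\ v \notin S,
    (forall v', v' \notin S -> center_weight Lf Lb v' <= center_weight Lf Lb v),
    S' = v |: S,
    (forall u, Lf' u = if [exists w, center_arc Lf Lb v u w] then v |: Lf u else Lf u) &
    (forall w, Lb' w = if [exists u, center_arc Lf Lb v u w] then v |: Lb w else Lb w)].

(* dhhl_run S Lf Lb Rf Rb : continuing from state (S,Lf,Lb), some execution
   (with arbitrary tie-breaking) terminates with output labeling (Rf,Rb). *)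
Inductive dhhl_run : {set V} -> labels -> labels -> labels -> labels -> Prop :=
| dhhl_done S Lf Lb :
    (forall u w, ~~ uncov Lf Lb u w) -> dhhl_run S Lf Lb Lf Lb
| dhhl_next S Lf Lb S' Lf' Lb' Rf Rb :
    (exists u w, uncov Lf Lb u w) ->
    dhhl_step S Lf Lb S' Lf' Lb' ->
    dhhl_run S' Lf' Lb' Rf Rb -> dhhl_run S Lf Lb Rf Rb.

Definition empty_labels : labels := fun _ => set0.

Definition dhhl_output (Rf Rb : labels) : Prop :=
  dhhl_run set0 empty_labels empty_labels Rf Rb.

End HHL.

(* Main.v *)
Require Import Defs.
From mathcomp Require Import all_boot zify.
Set Implicit Arguments. Unset Strict Implicit. Unset Printing Implicit Defensive.

Section Graded.
Variables (V : finType) (e : rel V) (lvl : V -> nat).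
Hypothesis Hgr : forall u v, e u v -> lvl v = (lvl u).+1.
Hypothesis Hlv : forall u, lvl u < #|V|.

Lemma path_lvl p u : path e u p -> lvl (last u p) = lvl u + size p.
Proof.
elim: p u => [|y p IH] u /=; first by rewrite addn0.
move/andP=> [/Hgr H Hp]; rewrite IH // H; lia.
Qed.

Lemma reach_lvl u w : reachable e u w -> lvl u <= lvl w.
Proof. by move=> /connectP[p Hp ->]; rewrite path_lvl // leq_addr. Qed.

Lemma walk_lenE k u w :
  walk_len e k u w = reachable e u w && (lvl w == lvl u + k).
Proof.
apply/idP/idP.
- case/existsP=> p /andP[Hp /eqP Hl]; apply/andP; split.
    by apply/connectP; exists p.
  by rewrite -Hl path_lvl // size_tuple.
- case/andP => /connectP[p Hp Hw] /eqP Hl.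
  have Hs : size p == k.
    by move: Hl; rewrite Hw path_lvl // => /eqP; rewrite eqn_add2l.
  apply/existsP; exists (Tuple Hs) => /=; by rewrite Hp -Hw eqxx.
Qed.

Lemma distE u w : reachable e u w -> dist e u w = lvl w - lvl u.
Proof.
move=> Hr; have Hle := reach_lvl Hr.
have Hd : lvl w - lvl u < #|V| by have := Hlv w; lia.
rewrite /dist.
set d := lvl w - lvl u.
have E : #|V| = d + (#|V| - d.+1).+1 by lia.
rewrite {1}E iotaD add0n /=.
rewrite find_cat.
have -> : has (fun k => walk_len e k u w) (iota 0 d) = false.
  apply/hasPn => k; rewrite mem_iota => /andP[_ Hk].
  rewrite walk_lenE Hr /=; apply/eqP; lia.
rewrite size_iota /= walk_lenE Hr /=.
have -> : lvl w == lvl u + d by apply/eqP; lia.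
by rewrite addn0.
Qed.

Lemma on_spE u w x : on_sp e u w x = reachable e u x && reachable e x w.
Proof.
apply/idP/idP.
- case/andP => Hr /existsP[p /and3P[Hp /eqP Hl Hx]].
  move: (tval p) Hp Hl Hx => q Hp Hl Hx.
  rewrite inE in Hx; case/orP: Hx => [/eqP ->|Hx].
    by rewrite /reachable connect0; move: Hr; rewrite /reachable.
  apply/andP; split; first by (apply: (path_connect Hp); rewrite inE Hx orbT).
  case/splitPr: Hx Hp Hl => p1 p2; rewrite cat_path last_cat /= => /and3P[_ _ Hp2] Hl.
  by apply/connectP; exists p2.
- case/andP => /connectP[p1 Hp1 Hx] /connectP[p2 Hp2 Hw].
  have Hr : reachable e u w.
    apply/connectP; exists (p1 ++ p2); first by rewrite cat_path Hp1 -Hx.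
    by rewrite last_cat -Hx.
  rewrite /on_sp Hr /=.
  have Hs : size (p1 ++ p2) == dist e u w.
    rewrite distE // Hw path_lvl // Hx path_lvl // size_cat; apply/eqP; lia.
  apply/existsP; exists (Tuple Hs) => /=.
  rewrite cat_path Hp1 -Hx Hp2 last_cat -Hx -Hw eqxx /=.
  rewrite -cat_cons mem_cat Hx mem_last //.
Qed.


Lemma covered_mono (Lf Lb Lf' Lb' : labels V) u w :
  (forall x, Lf x \subset Lf' x) -> (forall x, Lb x \subset Lb' x) ->
  covered e Lf Lb u w -> covered e Lf' Lb' u w.
Proof.
move=> Hf Hb /existsP[x /and3P[H1 H2 H3]]; apply/existsP; exists x.
by rewrite (subsetP (Hf u) _ H1) (subsetP (Hb w) _ H2).
Qed.

Definition I2 (S : {set V}) (Lf Lb : labels V) :=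
  forall v, v \in S -> forall u w, on_sp e u w v -> covered e Lf Lb u w.

Definition nLf (Lf Lb : labels V) v : labels V := fun x =>
  if [exists w, center_arc e Lf Lb v x w] then v |: Lf x else Lf x.
Definition nLb (Lf Lb : labels V) v : labels V := fun x =>
  if [exists u, center_arc e Lf Lb v u x] then v |: Lb x else Lb x.

Lemma nLf_sub (Lf Lb : labels V) v x : Lf x \subset nLf Lf Lb v x.
Proof. rewrite /nLf; case: ifP => _ //; exact: subsetUr. Qed.
Lemma nLb_sub (Lf Lb : labels V) v x : Lb x \subset nLb Lf Lb v x.
Proof. rewrite /nLb; case: ifP => _ //; exact: subsetUr. Qed.

Lemma I2_step S (Lf Lb : labels V) v : I2 S Lf Lb ->
  I2 (v |: S) (nLf Lf Lb v) (nLb Lf Lb v).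
Proof.
move=> HI v'; rewrite in_setU1 => /orP[/eqP -> | Hv'] u w Hsp.
- case: (boolP (covered e Lf Lb u w)) => Hc.
    exact: covered_mono (nLf_sub _ _ _) (nLb_sub _ _ _) Hc.
  have Hr : reachable e u w by move: Hsp; rewrite /on_sp => /andP[].
  have Ha : center_arc e Lf Lb v u w by rewrite /center_arc /uncov Hr Hc Hsp.
  apply/existsP; exists v; rewrite Hsp andbT.
  rewrite /nLf /nLb.
  have -> : [exists w0, center_arc e Lf Lb v u w0] by apply/existsP; exists w.
  have -> : [exists u0, center_arc e Lf Lb v u0 w] by apply/existsP; exists u.
  by rewrite !setU11.
- exact: covered_mono (nLf_sub _ _ _) (nLb_sub _ _ _) (HI _ Hv' _ _ Hsp).
Qed.

Lemma run_exists k S (Lf Lb : labels V) : #|~: S| <= k -> I2 S Lf Lb ->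
  exists Rf Rb, dhhl_run e S Lf Lb Rf Rb.
Proof.
elim: k S Lf Lb => [|k IH] S Lf Lb Hk HI;
  (case: (boolP [exists u, exists w, uncov e Lf Lb u w]) =>
    [/existsP[u /existsP[w Huw]] | Hno]);
  try (exists Lf, Lb; apply: dhhl_done => u0 w0; apply/negP => H; apply: (negP Hno);
       by apply/existsP; exists u0; apply/existsP; exists w0).
all: have Hu : u \in ~: S.
all: try (rewrite inE; apply/negP => HuS; move: Huw; rewrite /uncov => /andP[Hr];
      by rewrite (HI _ HuS u w) // on_spE /reachable ?connect0 //).
- by move: Hk; rewrite leqn0 => /eqP/cards0_eq Hk; rewrite Hk inE in Hu.
- case: (@arg_maxnP _ u (mem (~: S)) (center_weight e Lf Lb) Hu) => v Hv Hmax.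
  have [Rf [Rb HR]] : exists Rf Rb,
      dhhl_run e (v |: S) (nLf Lf Lb v) (nLb Lf Lb v) Rf Rb.
    apply: IH; last exact: I2_step.
    have Hp : ~: (v |: S) \proper ~: S.
      rewrite properEneq setCS subsetUr andbT; apply/eqP => Heq.
      by move: Hv; rewrite -Heq !inE eqxx.
    have := proper_card Hp; lia.
  exists Rf, Rb; apply: (dhhl_next (S' := v |: S)) HR.
    by exists u, w.
  exists v; split => //.
  + by move: Hv; rewrite -topredE /= inE.
  + move=> v' Hv'; apply: Hmax; rewrite /= inE; exact: Hv'.
Qed.

End Graded.

Section Hier.
Variables (V : finType) (key : V -> nat).

Definition klt (y u : V) :=
  (key y < key u) || ((key y == key u) && (enum_rank y < enum_rank u)).

Lemma klt_trans y u z : klt y u -> klt u z -> klt y z.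
Proof.
rewrite /klt => /orP[H1|/andP[/eqP H1 H1']] /orP[H2|/andP[/eqP H2 H2']].
- by rewrite (ltn_trans H1 H2).
- by rewrite -H2 H1.
- by rewrite H1 H2.
- by rewrite H1 H2 eqxx (ltn_trans H1' H2') orbT.
Qed.

Lemma klt_irr u : klt u u = false.
Proof. by rewrite /klt ltnn eqxx ltnn. Qed.

Lemma klt_total u v : u != v -> klt u v || klt v u.
Proof.
move=> Huv; rewrite /klt.
have Hr : enum_rank u != enum_rank v.
  by apply: contra Huv => /eqP/enum_rank_inj ->.
case: (ltngtP (key u) (key v)) => [H|H|Heq]; rewrite ?H ?orbT //.
by rewrite /= -neq_ltn.
Qed.

Definition kset u := [set y | klt y u].

Lemma kset_lt u : #|kset u| < #|V|.
Proof.
have : kset u \proper setT.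
  rewrite properT; apply/eqP => H.
  by have := in_setT u; rewrite -H inE klt_irr.
by move/proper_card; rewrite cardsT.
Qed.

Definition kpi (u : V) : 'I_#|V| := Ordinal (kset_lt u).

Lemma kset_sub u v : klt u v -> kset u \proper kset v.
Proof.
move=> Huv; rewrite properE; apply/andP; split.
  by apply/subsetP => y; rewrite !inE => Hy; exact: klt_trans Hy Huv.
by apply/subsetPn; exists u; rewrite !inE ?klt_irr.
Qed.

Lemma kpi_inj : injective kpi.
Proof.
move=> u v /(congr1 val) /= H; apply/eqP; apply/negPn/negP => Huv.
case/orP: (klt_total Huv) => /kset_sub /proper_card; rewrite H; lia.
Qed.

Lemma hier_of_key (Lf Lb : labels V) :
  (forall u v, u \in Lf v :|: Lb v -> u = v \/ key u < key v) ->
  is_hierarchical Lf Lb.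
Proof.
move=> H; exists kpi; split.
  by apply: inj_card_bij; [exact: kpi_inj | rewrite card_ord].
move=> u v /H [->|Hk] //=.
apply: subset_leq_card; apply/subsetP => y; rewrite !inE => Hy.
by apply: klt_trans Hy _; rewrite /klt Hk.
Qed.

End Hier.

Section Concrete.
Variable m : nat.
Definition Vtx : finType := (unit + ('I_m + ('I_m * 'I_8 + 'I_m)))%type.
Definition vC : Vtx := inl tt.
Definition vX j : Vtx := inr (inl j).
Definition vG j r : Vtx := inr (inr (inl (j, r))).
Definition vS i : Vtx := inr (inr (inr i)).

Definition EV (a b : Vtx) : bool :=
 match a, b with
 | inr (inr (inr _)), inl _ => true
 | inl _, inr (inl _) => true
 | inr (inl j), inr (inr (inl (j', r))) => (j == j') && (r < 2)
 | inr (inr (inl (j, r))), inr (inr (inl (j', r'))) =>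
     (j == j') && (r'.+1 == r) && ((r : nat) \in [:: 3; 4; 6; 7])
 | inr (inr (inl (j, r))), inr (inl j') => (j == j') && ((r : nat) \in [:: 2; 5])
 | _, _ => false end.

Definition lvlR (r : nat) := nth 0 [:: 4; 4; 2; 1; 0; 2; 1; 0] r.
Definition lvlV (a : Vtx) : nat :=
  match a with
  | inl _ => 2 | inr (inl _) => 3 | inr (inr (inl (_, r))) => lvlR r
  | inr (inr (inr _)) => 1 end.

Definition ReachV (a b : Vtx) : bool := (a == b) ||
 match a, b with
 | inr (inr (inr _)), inl _ => true
 | inr (inr (inr _)), inr (inl _) => true
 | inr (inr (inr _)), inr (inr (inl (_, r))) => r < 2
 | inl _, inr (inl _) => true
 | inl _, inr (inr (inl (_, r))) => r < 2
 | inr (inl j), inr (inr (inl (j', r))) => (j == j') && (r < 2)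
 | inr (inr (inl (j, r))), inr (inl j') => (j == j') && (2 <= r)
 | inr (inr (inl (j, r))), inr (inr (inl (j', r'))) =>
    (j == j') && (2 <= r) && ((r' < 2) || ((2 <= r') && (r' < r) && ((r < 5) == (r' < 5))))
 | _, _ => false end.

Ltac dv a := case: a => [[]|[?|[[? ?]|?]]].
Ltac isI8 r := let t := type of r in let _ := constr:(fun x : t => (x : 'I_8)) in idtac.
Ltac dr r := case: r => [[|[|[|[|[|[|[|[|?]]]]]]]] ?] //.

Lemma EV_lvl a b : EV a b -> lvlV b = (lvlV a).+1.
Proof.
dv a; dv b => //=; try match goal with r : _ |- _ => isI8 r; dr r end;
  try match goal with r : _ |- _ => isI8 r; dr r end; rewrite ?andbF //.
Qed.


Ltac fin := repeat (match goal with
 | H : is_true (_ && _) |- _ => let H1 := fresh in let H2 := fresh in case/andP: H => H1 H2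
 | H : is_true (?j == ?k) |- _ =>
     match type of j with nat => fail 1 | _ => move/eqP: H => H; try subst end
 | H : inr _ = inr _ |- _ => case: H => H; try subst
 | H : inl _ = inl _ |- _ => case: H => H; try subst
 | H : inr _ = inl _ |- _ => discriminate H
 | H : inl _ = inr _ |- _ => discriminate H
 | H : is_true (_ || _) |- _ => case/orP: H => H
 | H : (_ , _) = (_, _) |- _ => injection H; clear H; intros; try subst
 end).

Ltac finr := repeat match goal with H : ?T |- _ =>
    match type of T with Prop => revert H end end;
  repeat match goal with r : _ |- _ => isI8 r; dr r end.

Lemma Reach_step a b c : ReachV a b -> EV b c -> ReachV a c.
Proof.
dv a; dv b; dv c => //=; rewrite /ReachV /= => H1 H2; fin; rewrite ?eqxx ?orbT //; finr.
all: by rewrite /= ?orbT ?orbF.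
Qed.


Lemma eqG (j j' : 'I_m) (r r' : 'I_8) :
  ((inr (inr (inl (j, r))) : Vtx) == inr (inr (inl (j', r')))) = (j == j') && (r == r' :> nat).
Proof.
apply/eqP/andP => [[-> ->]|[/eqP -> /eqP/val_inj ->]] //.
Qed.

Definition nxt (a b : Vtx) : Vtx :=
  match a with
  | inr (inr (inr _)) => vC
  | inl _ => match b with inr (inl j) => vX j | inr (inr (inl (j, _))) => vX j | _ => a end
  | inr (inl _) => b
  | inr (inr (inl (j, r))) =>
      if (r : nat) \in [:: 2; 5] then vX j else vG j (inord r.-1)
  end.

Lemma Reach_next a b : ReachV a b -> a != b -> EV a (nxt a b) && ReachV (nxt a b) b.
Proof.
rewrite /ReachV => /orP[/eqP->|]; first by rewrite eqxx.
dv a; dv b => //= H1 _; fin; rewrite ?eqxx ?orbT //; finr.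
all: rewrite /vX /vG /vC /= ?eqG ?eqxx ?inordK //= ?orbT //.
Qed.


Lemma ReachV_refl a : ReachV a a.
Proof. by rewrite /ReachV eqxx. Qed.

Lemma lvlV_le4 a : lvlV a <= 4.
Proof. dv a => //=; match goal with r : _ |- _ => isI8 r; dr r end. Qed.

Definition dec (u : 'I_#|Vtx|) : Vtx := enum_val u.
Definition enc (a : Vtx) : 'I_#|Vtx| := enum_rank a.
Lemma decK : cancel dec enc. Proof. exact: enum_valK. Qed.
Lemma encK : cancel enc dec. Proof. exact: enum_rankK. Qed.

Definition eG : rel 'I_#|Vtx| := fun u v => EV (dec u) (dec v).
Definition lvlI (u : 'I_#|Vtx|) := lvlV (dec u).

Lemma eG_lvl u v : eG u v -> lvlI v = (lvlI u).+1.
Proof. exact: EV_lvl. Qed.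

Lemma reach_dec u w : reachable eG u w -> ReachV (dec u) (dec w).
Proof.
move=> /connectP[p Hp ->].
suff : forall x, ReachV (dec u) (dec x) -> path eG x p -> ReachV (dec u) (dec (last x p)).
  by apply; rewrite ?ReachV_refl.
elim: p {Hp} => [|y p IH] x //= Hx /andP[Hxy Hp].
apply: IH Hp; exact: Reach_step Hx Hxy.
Qed.

Lemma reach_enc a b : ReachV a b -> reachable eG (enc a) (enc b).
Proof.
move: {2}(4 - lvlV a) (leqnn (4 - lvlV a)) => d.
elim: d a => [|d IH] a Hd Hab; (case: (eqVneq a b) => [->|Hne]; first exact: connect0);
  have /andP[H1 H2] := Reach_next Hab Hne; have Hl := EV_lvl H1.
- have := lvlV_le4 (nxt a b); lia.
- apply: (connect_trans (connect1 (_ : eG (enc a) (enc (nxt a b))))).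
    by rewrite /eG !encK.
  apply: IH H2; lia.
Qed.


Definition lo1 (r : 'I_8) : 'I_8 := if (r : nat) \in [:: 3; 4; 6; 7] then inord r.-1 else r.
Definition lo2 (r : 'I_8) : 'I_8 := if (r : nat) \in [:: 4; 7] then inord r.-2 else lo1 r.

Definition LfV (a : Vtx) : {set Vtx} :=
  match a with
  | inr (inr (inr _)) => [set a; vC]
  | inr (inr (inl (j, r))) => if 2 <= r then [set a; vX j; vG j (lo1 r); vG j (lo2 r)] else [set a]
  | _ => [set a] end.
Definition LbV (a : Vtx) : {set Vtx} :=
  match a with
  | inr (inl _) => [set a; vC]
  | inr (inr (inl (j, r))) => if r < 2 then [set a; vX j; vC] else [set a]
  | _ => [set a] end.

Definition keyR (r : nat) := nth 0 [:: 2; 2; 2; 3; 4; 2; 3; 4] r.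
Definition keyV (a : Vtx) : nat :=
  match a with
  | inl _ => 0 | inr (inl _) => 1 | inr (inr (inl (_, r))) => keyR r
  | inr (inr (inr _)) => 2 end.

Definition hub (a b : Vtx) : Vtx :=
  if a == b then a else
  match a with
  | inr (inr (inr _)) => vC
  | inl _ => vC
  | inr (inl _) => a
  | inr (inr (inl (j, _))) =>
     match b with inr (inr (inl (_, r'))) => if r' < 2 then vX j else b | _ => vX j end
  end.

Lemma hub_ok a b : ReachV a b ->
  [&& hub a b \in LfV a, hub a b \in LbV b, ReachV a (hub a b) & ReachV (hub a b) b].
Proof.
move=> H; case: (eqVneq a b) => [<-|Hne].
  rewrite /hub eqxx ReachV_refl andbT.
  by clear H; dv a => //=; rewrite ?inE ?eqxx //=; case: ifP => _; case: ifP => _; rewrite !inE eqxx.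
rewrite /hub (negbTE Hne); move: H; rewrite /ReachV (negbTE Hne) /=.
move: Hne; dv a; dv b => //= _ H; fin; rewrite ?eqxx ?orbT //; finr.
all: rewrite /vX /vG /vC /= ?inE ?eqG ?eqxx ?inordK //= ?orbT //.
Qed.


Lemma key_ok a h : h \in LfV a :|: LbV a -> (h == a) || (keyV h < keyV a).
Proof.
dv a => /=; rewrite ?setUid; try (case: ifP => ?); try (case: ifP => ?);
  rewrite !inE => H; fin; rewrite ?eqxx //; finr.
all: rewrite /vX /vG /vC /lo1 /lo2 /= ?eqG ?eqxx ?inordK //= ?orbT //.
Qed.


Lemma cU (T : finType) (A B : {set T}) : #|A :|: B| <= #|A| + #|B|.
Proof. rewrite cardsU; lia. Qed.
Lemma card2 (T : finType) (x y : T) : #|[set x; y]| <= 2.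
Proof. by apply: leq_trans (cU _ _) _; rewrite !cards1. Qed.
Lemma card3 (T : finType) (x y z : T) : #|[set x; y; z]| <= 3.
Proof. apply: leq_trans (cU _ _) _; have := card2 x y; rewrite cards1; lia. Qed.
Lemma card4 (T : finType) (x y z w : T) : #|[set x; y; z; w]| <= 4.
Proof. apply: leq_trans (cU _ _) _; have := card3 x y z; rewrite cards1; lia. Qed.

Lemma size_ok a : #|LfV a| + #|LbV a| <= 5.
Proof.
dv a => /=; try (case: ifP => ?); try (case: ifP => ?); rewrite ?cards1.
all: try by [].
all: try lia.
all: first [ apply: leq_trans (leq_add (leqnn 1) (card2 _ _)) _
           | apply: leq_trans (leq_add (card4 _ _ _ _) (leqnn 1)) _
           | apply: leq_trans (leq_add (leqnn 1) (card3 _ _ _)) _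
           | apply: leq_trans (leq_add (card2 _ _) (leqnn 1)) _ ]; by [].
Qed.


Definition r0 : 'I_8 := @Ordinal 8 0 isT.
Definition r1 : 'I_8 := @Ordinal 8 1 isT.
Definition r4 : 'I_8 := @Ordinal 8 4 isT.
Definition r7 : 'I_8 := @Ordinal 8 7 isT.
Definition vA (t : bool) j := vG j (if t then r4 else r7).
Definition vB (t : bool) j := vG j (if t then r0 else r1).

Definition tp (h : Vtx) (k : bool) : Vtx * Vtx :=
  match h with
  | inr (inr (inl (j, r))) =>
      if r < 2 then (vA k j, h) else if r < 5 then (vA true j, vB k j) else (vA false j, vB k j)
  | _ => (h, h) end.

Lemma top_through a b h : (forall j, h != vX j) -> lvlV a = 0 -> lvlV b = 4 ->
  ReachV a h -> ReachV h b ->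
  ((a == (tp h true).1) && (b == (tp h true).2)) || ((a == (tp h false).1) && (b == (tp h false).2)).
Proof.
move=> Hx; move: Hx; rewrite /ReachV.
case: h => [[]|[jh|[[jh rh]|ih]]] Hx; [| by have := Hx jh; rewrite /vX eqxx | |]; dv a => //; dv b => //=;
  move=> Ha Hb H1 H2; fin; rewrite ?eqxx ?orbT //; finr.
all: rewrite /vX /vG /vC /vA /vB /= ?eqG ?eqxx ?inordK //= ?orbT //.
Qed.


Lemma sx_sp i j h : ReachV (vS i) h -> ReachV h (vX j) ->
  [|| h == vS i, h == vC | h == vX j].
Proof.
rewrite /ReachV; dv h => //=; rewrite ?eqxx ?orbT //=; move=> H1 H2; fin;
  rewrite ?eqxx ?orbT //; finr.
all: rewrite /vX /vG /vC /vS /= ?eqG ?eqxx //= ?orbT //.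
all: by move=> _ ->; rewrite eqxx ?orbT.
Qed.

Lemma gx j r j' : ReachV (vG j r) (vX j') -> j = j'.
Proof. by rewrite /ReachV /= => /andP[/eqP]. Qed.

Lemma lvlA t j : lvlV (vA t j) = 0. Proof. by case: t. Qed.
Lemma lvlB t j : lvlV (vB t j) = 4. Proof. by case: t. Qed.
Lemma reachAX t j : ReachV (vA t j) (vX j). Proof. by case: t; rewrite /ReachV /= eqxx. Qed.
Lemma reachXB t j : ReachV (vX j) (vB t j). Proof. by case: t; rewrite /ReachV /= eqxx. Qed.
Lemma reachAB t t' j : ReachV (vA t j) (vB t' j). Proof. by case: t; case: t'; rewrite /ReachV /vA /vB /vG /= eqxx ?orbT. Qed.
Lemma reachSX i j : ReachV (vS i) (vX j). Proof. by []. Qed.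

End Concrete.

Lemma sumconst (T : finType) (c : nat) : \sum_(u : T) c = #|T| * c.
Proof. by rewrite sum_nat_const. Qed.

Lemma sum2 (T : finType) (F : T -> nat) a b : a != b -> F a + F b <= \sum_u F u.
Proof.
move=> Hab; rewrite (bigD1 a) //= leq_add2l (bigD1 b) 1?eq_sym //=.
exact: leq_addr.
Qed.

Section Main.
Variable m : nat.
Hypothesis Hm : 0 < m.
Local Notation V := ('I_#|Vtx m|).
Local Notation e := (@eG m).
Local Notation lvl := (@lvlI m).

Lemma cardVtx : #|Vtx m| = 10 * m + 1.
Proof. rewrite /Vtx !card_sum card_unit card_prod !card_ord; lia. Qed.

Lemma Hlv (u : V) : lvl u < #|V|.
Proof. rewrite card_ord cardVtx; have := lvlV_le4 (dec u); rewrite /lvlI; lia. Qed.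

Definition N0 := #|V|.
Lemma N0E : N0 = 10 * m + 1. Proof. by rewrite /N0 card_ord cardVtx. Qed.

Lemma reachE (u w : V) : reachable e u w = ReachV (dec u) (dec w).
Proof. apply/idP/idP; [exact: reach_dec | by move/reach_enc; rewrite !decK]. Qed.

Lemma spE (u w h : V) : on_sp e u w h = ReachV (dec u) (dec h) && ReachV (dec h) (dec w).
Proof. by rewrite (on_spE (@eG_lvl m) Hlv) !reachE. Qed.

Lemma dE (u w : V) : reachable e u w -> dist e u w = lvl w - lvl u.
Proof. exact: (distE (@eG_lvl m) Hlv). Qed.

Lemma eq_enc (u : V) a : (u == enc a) = (dec u == a).
Proof. by apply/eqP/eqP => [->|<-]; rewrite ?encK ?decK. Qed.

Definition x j : V := enc (vX j).
Definition s i : V := enc (vS i).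
Definition c : V := enc (@vC m).
Definition A t j : V := enc (vA t j).
Definition B t j : V := enc (vB t j).

Lemma pw_top t t' j : pair_weight e (A t j) (B t' j) = N0 ^ 4.
Proof.
rewrite /pair_weight dE; last by rewrite reachE !encK reachAB.
by rewrite /lvlI !encK lvlA lvlB.
Qed.

Lemma pw_le (u w : V) : reachable e u w ->
  pair_weight e u w <= (if (lvl u == 0) && (lvl w == 4) then N0 ^ 4 else (u != w) * N0 ^ 2).
Proof.
move=> Hr; rewrite /pair_weight (dE Hr).
have Hle := reach_lvl (@eG_lvl m) Hr.
have H4 : lvl w <= 4 by exact: lvlV_le4.
case: (eqVneq u w) => [<-|Hne]; first by rewrite subnn.
case: (boolP ((lvl u == 0) && (lvl w == 4))) => [/andP[/eqP H0 /eqP H04]|/nandP Htop].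
  by rewrite H0 H04.
case: ifP => // Hd.
have Hd3 : lvl w - lvl u <= 3 by case: Htop => /eqP; lia.
have Htl : trunc_log 2 (lvl w - lvl u) <= 1.
  rewrite leqNgt; apply/negP => H.
  have := leq_pexp2l (isT : 0 < 2) H.
  have := @trunc_logP 2 (lvl w - lvl u) isT (_ : 0 < _).
  move/negbT: Hd; rewrite -lt0n => Hd0 => /(_ Hd0).
  rewrite expnS expn1; lia.
rewrite /= mul1n /N0; apply: leq_pexp2l; first by rewrite card_ord cardVtx; lia.
lia.
Qed.


Lemma N0_gt0 : 0 < N0. Proof. by rewrite N0E; lia. Qed.

Lemma sum_ind1 (P Q : V) : \sum_(u : V) \sum_(w : V) ((u == P) && (w == Q) : nat) = 1.
Proof.
rewrite (bigD1 P) //= [X in _ + X]big1 => [|u /negbTE Hu]; last by apply: big1 => w _; rewrite Hu.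
by rewrite addn0 eqxx (bigD1 Q) //= eqxx big1 // => w /negbTE ->.
Qed.

Lemma sum_neq : \sum_(u : V) \sum_(w : V) (u != w : nat) = N0 * N0.-1.
Proof.
rewrite (eq_bigr (fun _ => N0.-1)) ?sumconst // => u _.
rewrite (bigD1 u) //= eqxx add0n.
rewrite (eq_bigr (fun _ => 1)) => [|w Hw]; last by rewrite eq_sym Hw.
by rewrite sum1_card cardC1.
Qed.

Lemma cw_small (Lf Lb : labels V) (v : V) : (forall j, dec v != vX j) ->
  center_weight e Lf Lb v < 3 * N0 ^ 4.
Proof.
move=> Hx; rewrite /center_weight.
set P1 := enc (tp (dec v) true).1. set Q1 := enc (tp (dec v) true).2.
set P2 := enc (tp (dec v) false).1. set Q2 := enc (tp (dec v) false).2.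
apply: (@leq_ltn_trans (\sum_(u : V) \sum_(w : V)
   ((((u == P1) && (w == Q1)) + ((u == P2) && (w == Q2))) * N0 ^ 4 + (u != w) * N0 ^ 2))).
  apply: leq_sum => u _; rewrite big_mkcond; apply: leq_sum => w _.
  case: ifP => // /andP[/andP[Hr _] Hsp].
  apply: leq_trans (pw_le Hr) _.
  case: ifP => [/andP[/eqP H0 /eqP H4]|_]; last exact: leq_addl.
  move: Hsp; rewrite spE => /andP[H1 H2].
  have := top_through Hx H0 H4 H1 H2.
  rewrite -!eq_enc -/P1 -/Q1 -/P2 -/Q2 mulnDl.
  case/orP=> /andP[/eqP -> /eqP ->]; rewrite !eqxx mul1n.
    by rewrite -addnA leq_addr.
  exact: leq_trans (leq_addl _ _) (leq_addr _ _).
rewrite (eq_bigr (fun u => (\sum_(w : V) (((u == P1) && (w == Q1)) + ((u == P2) && (w == Q2)))) * N0 ^ 4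
   + (\sum_(w : V) (u != w : nat)) * N0 ^ 2)); last first.
  by move=> u _; rewrite big_split /= !big_distrl.
rewrite big_split /= -!big_distrl /=.
under eq_bigr do rewrite big_split /=.
rewrite big_split /= !sum_ind1 sum_neq.
have HN := N0_gt0.
have H1 : N0 * N0.-1 < N0 * N0 by rewrite ltn_pmul2l //; lia.
have H2 : N0 * N0.-1 * N0 ^ 2 < N0 ^ 4.
  rewrite (_ : N0 ^ 4 = (N0 * N0) * N0 ^ 2); last by rewrite !expnS expn0 muln1 !mulnA.
  by rewrite ltn_pmul2r // expn_gt0 HN.
move: H2; set X := N0 * N0.-1 * N0 ^ 2; set Y := N0 ^ 4; lia.
Qed.


Lemma B_neq j : B true j != B false j.
Proof. by rewrite /B /enc (inj_eq enum_rank_inj) /vB /vG eqG eqxx. Qed.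
Lemma A_neq j : A true j != A false j.
Proof. by rewrite /A /enc (inj_eq enum_rank_inj) /vA /vG eqG eqxx. Qed.

Lemma cw_big (Lf Lb : labels V) j : (forall t t', uncov e Lf Lb (A t j) (B t' j)) ->
  4 * N0 ^ 4 <= center_weight e Lf Lb (x j).
Proof.
move=> HU.
have Harc : forall t t', center_arc e Lf Lb (x j) (A t j) (B t' j).
  by move=> t t'; rewrite /center_arc HU spE /x /A /B !encK reachAX reachXB.
have Hin : forall t, 2 * N0 ^ 4 <=
    \sum_(w | center_arc e Lf Lb (x j) (A t j) w) pair_weight e (A t j) w.
  move=> t; rewrite big_mkcond /=.
  apply: leq_trans (sum2 (fun w => if center_arc e Lf Lb (x j) (A t j) w
                                   then pair_weight e (A t j) w else 0) (B_neq j)).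
  by rewrite /= !Harc !pw_top; lia.
rewrite /center_weight.
apply: leq_trans (sum2 _ (A_neq j)).
have := Hin true; have := Hin false; lia.
Qed.


Definition J (S : {set V}) (Lf Lb : labels V) :=
  [/\ (forall u, Lf u \subset S /\ Lb u \subset S),
      (forall j, x j \notin S -> forall t t', uncov e Lf Lb (A t j) (B t' j)),
      (forall j, x j \in S -> forall i, x j \in Lf (s i)) &
      ((exists j, x j \notin S) -> c \notin S /\ forall i, s i \notin S)].

Lemma enc_inj : injective (@enc m). Proof. exact: can_inj (@encK m). Qed.

Lemma J_step S (Lf Lb : labels V) S' (Lf' Lb' : labels V) :
  J S Lf Lb -> dhhl_step e S Lf Lb S' Lf' Lb' -> J S' Lf' Lb'.
Proof.
move=> [J1 J2 J3 J4] [v [Hv Hmax -> HLf HLb]].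
have Sf : forall u, Lf u \subset Lf' u /\ Lf' u \subset v |: Lf u.
  by move=> u; rewrite HLf; case: ifP => _; split; rewrite ?subsetUr ?subxx.
have Sb : forall u, Lb u \subset Lb' u /\ Lb' u \subset v |: Lb u.
  by move=> u; rewrite HLb; case: ifP => _; split; rewrite ?subsetUr ?subxx.
have J1' : forall u, Lf' u \subset v |: S /\ Lb' u \subset v |: S.
  move=> u; case: (Sf u) (Sb u) (J1 u) => _ H1 [_ H2] [H3 H4]; split.
    exact: subset_trans H1 (setUS _ H3).
  exact: subset_trans H2 (setUS _ H4).
case: (boolP [exists j, x j \notin S]) => [/existsP[j0 Hj0]|Hall].
- have [Hc Hs] := J4 (ex_intro _ j0 Hj0).
  have Hbig := cw_big (J2 j0 Hj0).
  have Hge := Hmax _ Hj0.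
  have [j1 Ev] : exists j1, v = x j1.
  { case Ed: (dec v) => [[]|[j1|[[j1 r]|i1]]]; try (exists j1; by rewrite /x /vX -Ed decK).
    all: have Hnx : forall j, dec v != vX j by move=> j; rewrite Ed /vX.
    all: have := cw_small Lf Lb Hnx; lia. }
  subst v.
  split.
  + exact: J1'.
  + move=> j; rewrite in_setU1 negb_or => /andP[Hneq HjS] t t'.
    case/andP: (J2 j HjS t t') => Hr Hnc.
    rewrite /uncov Hr /=; apply/negP => /existsP[h /and3P[Hh1 Hh2 Hh3]].
    case: (eqVneq h (x j1)) => [Eh|Eh].
      move: Hh3; rewrite Eh spE /A /x !encK => /andP[/gx Ej _].
      by rewrite Ej eqxx in Hneq.
    have Hf : h \in Lf (A t j).
      by have := subsetP (Sf (A t j)).2 _ Hh1; rewrite in_setU1 (negbTE Eh).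
    have Hb : h \in Lb (B t' j).
      by have := subsetP (Sb (B t' j)).2 _ Hh2; rewrite in_setU1 (negbTE Eh).
    by apply: (negP Hnc); apply/existsP; exists h; rewrite Hf Hb Hh3.
  + move=> j; rewrite in_setU1 => /orP[/eqP Ej|HjS] i; last first.
      exact: subsetP (Sf (s i)).1 _ (J3 j HjS i).
    rewrite Ej HLf.
    have -> : [exists w, center_arc e Lf Lb (x j1) (s i) w].
      apply/existsP; exists (x j1).
      rewrite /center_arc /uncov spE reachE /s /x !encK reachSX ReachV_refl /= andbT.
      apply/existsP => -[h /and3P[Hh1 Hh2 Hh3]].
      have hS := subsetP (J1 (s i)).1 _ Hh1.
      move: Hh3; rewrite spE /s /x !encK => /andP[H1 H2].
      case/or3P: (sx_sp H1 H2) => /eqP Eh.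
      * by move: hS; rewrite -(decK h) Eh -/(s i) (negbTE (Hs i)).
      * by move: hS; rewrite -(decK h) Eh -/c (negbTE Hc).
      * by move: hS; rewrite -(decK h) Eh -/(x j1) (negbTE Hv).
    exact: setU11.
  + move=> _; split.
      by rewrite in_setU1 negb_or Hc andbT /x /c (inj_eq enc_inj).
    by move=> i; rewrite in_setU1 negb_or Hs andbT /x /s (inj_eq enc_inj).
- have HS : forall j, x j \in S.
    move=> j; apply/negPn/negP => H; move/negP: Hall; apply; by apply/existsP; exists j.
  split.
  + exact: J1'.
  + by move=> j; rewrite in_setU1 HS orbT.
  + move=> j _ i; exact: subsetP (Sf (s i)).1 _ (J3 j (HS j) i).
  + by move=> [j]; rewrite in_setU1 HS orbT.
Qed.

Lemma J_run S (Lf Lb Rf Rb : labels V) : dhhl_run e S Lf Lb Rf Rb -> J S Lf Lb ->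
  forall i j, x j \in Rf (s i).
Proof.
elim => {S Lf Lb Rf Rb} [S Lf Lb Hdone | S Lf Lb S' Lf' Lb' Rf Rb _ Hstep _ IH] HJ.
- case: HJ => _ J2 J3 _ i j; apply: J3; apply/negPn/negP => H.
  by have := Hdone (A true j) (B true j); rewrite J2.
- exact: IH (J_step HJ Hstep).
Qed.

Lemma J0 : J set0 (@empty_labels V) (@empty_labels V).
Proof.
split.
- by move=> u; rewrite /empty_labels sub0set.
- move=> j _ t t'; rewrite /uncov reachE /A /B !encK reachAB /=.
  by apply/existsP => -[h]; rewrite /empty_labels inE.
- by move=> j; rewrite inE.
- by move=> _; split => [|i]; rewrite inE.
Qed.

Lemma size_lb (Rf Rb : labels V) : (forall i j, x j \in Rf (s i)) -> m * m <= hl_size Rf Rb.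
Proof.
move=> H; rewrite /hl_size.
set SS := [set s i | i in [set: 'I_m]].
apply: (@leq_trans (\sum_(u in SS) #|Rf u|)); last first.
  apply: (@leq_trans (\sum_u #|Rf u|)).
    by rewrite [X in _ <= X](bigID (mem SS)) /= leq_addr.
  by apply: leq_sum => u _; exact: leq_addr.
rewrite big_imset /=; last by move=> i1 i2 _ _ /enc_inj [].
apply: (@leq_trans (\sum_(i in [set: 'I_m]) m)).
  by rewrite sum_nat_const cardsT card_ord.
apply: leq_sum => i _.
apply: (@leq_trans #|[set x j | j in [set: 'I_m]]|).
  by rewrite card_imset ?cardsT ?card_ord // => j1 j2 /enc_inj [].
apply: subset_leq_card; apply/subsetP => y /imsetP[j _ ->]; exact: H.
Qed.

End Main.

Lemma in_encset m (a : Vtx m) (A0 : {set Vtx m}) : (enc a \in @enc m @: A0) = (a \in A0).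
Proof.
apply/imsetP/idP => [[b Hb /enc_inj ->] //|H]; by exists a.
Qed.

Theorem mainTheorem8 :
  exists a C : nat,
    forall N : nat, exists n : nat, (N <= n)%N /\
      exists e : rel 'I_n,
        (exists Rf Rb, dhhl_output e Rf Rb) /\
        (forall Rf Rb, dhhl_output e Rf Rb ->
           (n ^ 3 <= (a * hl_size Rf Rb) ^ 2)%N) /\
        (exists Lf Lb, is_HHL e Lf Lb /\ (hl_size Lf Lb <= C * n)%N).
Proof.
exists 37, 5 => N.
pose m := N.+1.
have Hm : 0 < m by [].
exists #|Vtx m|; split; first by rewrite (cardVtx Hm); lia.
exists (@eG m); split; [|split].
- have HI : I2 (@eG m) set0 (@empty_labels _) (@empty_labels _) by move=> v; rewrite inE.
  have [Rf [Rb H]] := run_exists (@eG_lvl m) (Hlv Hm) (leqnn #|~: set0|) HI.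
  by exists Rf, Rb.
- move=> Rf Rb Hrun.
  have Hs := size_lb Rb (J_run Hm Hrun (J0 m)).
  move: Hs; move: (hl_size Rf Rb) => h Hs; rewrite (cardVtx Hm).
  apply: (@leq_trans ((37 * (m * m)) ^ 2)); first nia.
  by rewrite leq_exp2r // leq_mul2l Hs orbT.
- exists (fun u => @enc m @: LfV (dec u)), (fun u => @enc m @: LbV (dec u)).
  split; [split|].
  + move=> u w Hr.
    case/and4P: (hub_ok (reach_dec Hr)) => H1 H2 H3 H4.
    apply/existsP; exists (enc (hub (dec u) (dec w))).
    by rewrite !in_encset H1 H2 spE // encK H3 H4.
  + apply: (hier_of_key (key := fun u => keyV (dec u))) => h u.
    rewrite in_setU => /orP[]/imsetP[a Ha ->].
    * have := @key_ok m (dec u) a; rewrite in_setU Ha /= => /(_ isT).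
      case/orP => [/eqP ->|Hk].
        by left; rewrite decK.
      by right; rewrite encK.
    * have := @key_ok m (dec u) a; rewrite in_setU Ha orbT => /(_ isT).
      case/orP => [/eqP ->|Hk].
        by left; rewrite decK.
      by right; rewrite encK.
  + rewrite /hl_size.
    apply: (@leq_trans (\sum_(u : 'I_#|Vtx m|) 5)).
      apply: leq_sum => u _; rewrite !card_imset; [exact: size_ok|exact: enc_inj|exact: enc_inj].
    by rewrite sumconst card_ord mulnC.
Qed.
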